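(* Let $K_c=\operatorname{conv}\big(\mathbb{S}^{d-1}\cup\{\boldsymbol v_i\mid i\in I\}\big)\subset\mathbb{E}^d$ be a cap body, let $i\in I$, and let $S_i=\operatorname{bd}\operatorname{conv}(\mathbb{S}^{d-1}\cup\{\boldsymbol v_i\})\setminus\mathbb{S}^{d-1}$ be the spike of the vertex $\boldsymbol v_i$. Then a direction $\boldsymbol u\in\mathbb{S}^{d-1}$ illuminates every point of $S_i$ if and only if $\boldsymbol u$ illuminates the vertex $\boldsymbol v_i$.
   Context: $\mathbb{S}^{d-1}$ is the unit sphere centred at the origin and $B^d$ the closed unit ball. A cap body is $\operatorname{conv}(\mathbb{S}^{d-1}\cup\{\boldsymbol v_i\mid i\in I\})$ where $\{\boldsymbol v_i\}$ is a countable subset of $\mathbb{E}^d\setminus B^d$ such that for distinct $i,j$ the segment $\overline{\boldsymbol v_i\boldsymbol v_j}$ intersects $B^d$; the $\boldsymbol v_i$ are its vertices. A direction $\boldsymbol u\in\mathbb{S}^{d-1}$ illuminates a boundary point $\boldsymbol p$ of the convex body $K_c$ if $\boldsymbol p+\lambda\boldsymbol u$ is in the interior of $K_c$ for some $\lambda>0$. *)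

(* Defs.v *)
From HB Require Import structures.
From mathcomp Require Import all_boot all_order all_algebra.
From mathcomp Require Import classical_sets reals.
Set Implicit Arguments. Unset Strict Implicit. Unset Printing Implicit Defensive.
Import Order.TTheory GRing.Theory Num.Theory.
Local Open Scope ring_scope.
Local Open Scope classical_set_scope.

(* Points of E^d are row vectors 'rV[R]_d with the Euclidean inner product. *)
Definition dotv (R : realType) (d : nat) (x y : 'rV[R]_d) : R :=
  \sum_(k < d) x 0 k * y 0 k.

Definition sphere (R : realType) (d : nat) : set 'rV[R]_d :=
  [set x | dotv x x = 1].
Definition ball_unit (R : realType) (d : nat) : set 'rV[R]_d :=
  [set x | dotv x x <= 1].

Definition conv (R : realType) (d : nat) (A : set 'rV[R]_d) : set 'rV[R]_d :=
  [set x | exists n (w : 'I_n -> R) (p : 'I_n -> 'rV[R]_d),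
     [/\ forall k, 0 <= w k, \sum_(k < n) w k = 1,
         forall k, A (p k) & x = \sum_(k < n) w k *: p k]].

Arguments sphere R d : clear implicits.
Arguments ball_unit R d : clear implicits.

Definition interior_e (R : realType) (d : nat) (A : set 'rV[R]_d) : set 'rV[R]_d :=
  [set x | exists e : R, 0 < e /\
     forall y, dotv (y - x) (y - x) < e ^+ 2 -> A y].
Definition closure_e (R : realType) (d : nat) (A : set 'rV[R]_d) : set 'rV[R]_d :=
  [set x | forall e : R, 0 < e ->
     exists y, A y /\ dotv (y - x) (y - x) < e ^+ 2].
Definition bd (R : realType) (d : nat) (A : set 'rV[R]_d) : set 'rV[R]_d :=
  [set x | closure_e A x /\ ~ interior_e A x].

Definition cap_body (R : realType) (d : nat) (I : Type) (v : I -> 'rV[R]_d) :=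
  conv (sphere R d `|` range v).

Definition spike (R : realType) (d : nat) (w : 'rV[R]_d) : set 'rV[R]_d :=
  bd (conv (sphere R d `|` [set w])) `\` sphere R d.

Definition illuminates (R : realType) (d : nat) (K : set 'rV[R]_d)
    (u p : 'rV[R]_d) : Prop :=
  exists lam : R, 0 < lam /\ interior_e K (p + lam *: u).

(* Main.v *)
Require Import Defs.
From HB Require Import structures.
From mathcomp Require Import all_boot all_order all_algebra.
From mathcomp Require Import classical_sets reals.
From mathcomp Require Import ring lra.
Import Order.TTheory GRing.Theory Num.Theory.
Local Open Scope ring_scope.
Local Open Scope classical_set_scope.
Set Implicit Arguments. Unset Strict Implicit.

Section Dot.
Variables (R : realType) (d : nat).
Implicit Types (x y z : 'rV[R]_d).

Lemma dotvC x y : dotv x y = dotv y x.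
Proof. by rewrite /dotv; apply: eq_bigr => k _; rewrite mulrC. Qed.

Lemma dotvDl x y z : dotv (x + y) z = dotv x z + dotv y z.
Proof. by rewrite /dotv -big_split; apply: eq_bigr => k _; rewrite !mxE mulrDl. Qed.

Lemma dotvZl a x y : dotv (a *: x) y = a * dotv x y.
Proof. by rewrite /dotv mulr_sumr; apply: eq_bigr => k _; rewrite !mxE mulrA. Qed.

Lemma dotvNl x y : dotv (- x) y = - dotv x y.
Proof. by rewrite /dotv -sumrN; apply: eq_bigr => k _; rewrite !mxE mulNr. Qed.

Lemma dotv0l y : dotv 0 y = 0.
Proof. by rewrite /dotv big1 // => k _; rewrite mxE mul0r. Qed.

Lemma dotvBl x y z : dotv (x - y) z = dotv x z - dotv y z.
Proof. by rewrite dotvDl dotvNl. Qed.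

Lemma dotvDr x y z : dotv z (x + y) = dotv z x + dotv z y.
Proof. by rewrite dotvC dotvDl !(dotvC z). Qed.
Lemma dotvZr a x y : dotv y (a *: x) = a * dotv y x.
Proof. by rewrite dotvC dotvZl dotvC. Qed.
Lemma dotvNr x y : dotv y (- x) = - dotv y x.
Proof. by rewrite dotvC dotvNl dotvC. Qed.
Lemma dotvBr x y z : dotv z (x - y) = dotv z x - dotv z y.
Proof. by rewrite dotvDr dotvNr. Qed.

Lemma dotv_suml n (w : 'I_n -> R) (p : 'I_n -> 'rV[R]_d) y :
  dotv (\sum_(k < n) w k *: p k) y = \sum_(k < n) w k * dotv (p k) y.
Proof.
elim: n w p => [|n IH] w p; first by rewrite !big_ord0 dotv0l.
by rewrite !big_ord_recr /= dotvDl IH dotvZl.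
Qed.

Lemma dotv_ge0 x : 0 <= dotv x x.
Proof. by apply: sumr_ge0 => k _; rewrite -expr2 sqr_ge0. Qed.

Lemma dotv_sqD x y : dotv (x + y) (x + y) = dotv x x + 2 * dotv x y + dotv y y.
Proof. rewrite dotvDl !dotvDr (dotvC y x); ring. Qed.

Lemma dotv_amgm x y : 2 * dotv x y <= dotv x x + dotv y y.
Proof.
have := dotv_ge0 (x - y).
rewrite dotvBl !dotvBr (dotvC y x); lra.
Qed.

Lemma dotv_amgmN x y : - (2 * dotv x y) <= dotv x x + dotv y y.
Proof.
have := dotv_ge0 (x + y); rewrite dotv_sqD; lra.
Qed.

Lemma dotv_par x y : dotv (x + y) (x + y) <= 2 * dotv x x + 2 * dotv y y.
Proof. have := dotv_amgm x y; rewrite dotv_sqD; lra. Qed.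

Lemma dotv_wamgm t x y : 0 < t -> - (2 * dotv x y) <= t * dotv x x + t^-1 * dotv y y.
Proof.
move=> t0.
have := dotv_ge0 (t *: x + y); rewrite dotv_sqD !dotvZl dotvZr => H.
have : 0 <= t^-1 * (t * (t * dotv x x) + 2 * (t * dotv x y) + dotv y y).
  by rewrite mulr_ge0 // invr_ge0 ltW.
have -> : t^-1 * (t * (t * dotv x x) + 2 * (t * dotv x y) + dotv y y)
   = t * dotv x x + 2 * dotv x y + t^-1 * dotv y y.
  by field; rewrite gt_eqF.
lra.
Qed.

End Dot.

Section Conv.
Variables (R : realType) (d : nat).
Implicit Types (A B : set 'rV[R]_d).

Lemma conv_sub A x : A x -> conv A x.
Proof.
move=> Ax; exists 1%N, (fun _ => 1), (fun _ => x); split=> //; rewrite ?big_ord1 ?scale1r //.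
Qed.

Lemma conv_mono A B x : A `<=` B -> conv A x -> conv B x.
Proof.
move=> AB [n [w [p [w0 w1 Ap ->]]]]; exists n, w, p; split => // k; exact: AB.
Qed.

Lemma conv2 A x y t : conv A x -> conv A y -> 0 <= t <= 1 ->
  conv A (t *: x + (1 - t) *: y).
Proof.
move=> [n [w [p [w0 w1 Ap ->]]]] [m [w' [p' [w0' w1' Ap' ->]]]] /andP[t0 t1].
exists (n + m)%N,
  (fun k => match split k with inl a => t * w a | inr b => (1 - t) * w' b end),
  (fun k => match split k with inl a => p a | inr b => p' b end).
split.
- move=> k; case: (split k) => a; apply: mulr_ge0 => //; lra.
- rewrite big_split_ord /=.
  under eq_bigr => a _ do rewrite (unsplitK (inl a)).
  under [X in _ + X = _]eq_bigr => a _ do rewrite (unsplitK (inr a)).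
  by rewrite -!mulr_sumr w1 w1' !mulr1 addrC subrK.
- by move=> k; case: (split k).
- rewrite big_split_ord /=.
  under [in RHS]eq_bigr => a _ do rewrite (unsplitK (inl a)).
  under [X in _ = _ + X]eq_bigr => a _ do rewrite (unsplitK (inr a)).
  by rewrite !scaler_sumr; congr (_ + _); apply: eq_bigr => a _; rewrite scalerA.
Qed.

Lemma convS A n (w : 'I_n -> R) (p : 'I_n -> 'rV[R]_d) :
  (forall k, 0 <= w k) -> \sum_(k < n) w k = 1 -> (forall k, conv A (p k)) ->
  conv A (\sum_(k < n) w k *: p k).
Proof.
elim: n w p => [|n IH] w p w0 w1 Ap.
  by move: w1; rewrite big_ord0 => /eqP; rewrite eq_sym oner_eq0.
rewrite big_ord_recl; rewrite big_ord_recl in w1.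
set s := \sum_(i < n) w (lift ord0 i) in w1.
have s0 : 0 <= s by apply: sumr_ge0.
have [sz|sp] := eqVneq s 0.
  have wz : forall i, w (lift ord0 i) = 0.
    by move=> i; apply: (psumr_eq0P _ sz) => // j _; apply: w0.
  rewrite big1 ?addr0; last by move=> i _; rewrite wz scale0r.
  have w01 : w ord0 = 1 by rewrite sz addr0 in w1.
  by rewrite w01 scale1r; apply: Ap.
have sgt : 0 < s by rewrite lt_def sp.
have -> : \sum_(i < n) w (lift ord0 i) *: p (lift ord0 i) =
          (1 - w ord0) *: \sum_(i < n) (s^-1 * w (lift ord0 i)) *: p (lift ord0 i).
  rewrite scaler_sumr; apply: eq_bigr => i _; rewrite scalerA mulrA.
  have -> : 1 - w ord0 = s by rewrite -w1; ring.
  by rewrite divff // mul1r.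
apply: conv2.
- exact: Ap.
- apply: IH.
  + by move=> k; rewrite mulr_ge0 // invr_ge0.
  + by rewrite -mulr_sumr mulVf.
  + by move=> k; apply: Ap.
- have := w0 ord0; lra.
Qed.
End Conv.

Section Geo.
Variables (R : realType) (d : nat).

Lemma decomp (A : set 'rV[R]_d) v c : sphere R d `<=` A ->
  conv (sphere R d `|` [set v]) c ->
  exists W : R, [/\ 0 <= W, W <= 1,
   forall q, dotv c q <= W * dotv v q + (1 - W) * ((1 + dotv q q) / 2) &
   forall a', conv A a' -> conv A (c + W *: (a' - v))].
Proof.
move=> SA [n [w [p [w0 w1 Ap ->]]]].
pose b k : R := (p k == v)%:R.
have b01 k : 0 <= b k <= 1 by rewrite /b; case: (p k == v); rewrite /= ?ler01 ?lexx.
exists (\sum_(k < n) w k * b k); split.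
- by apply: sumr_ge0 => k _; have := b01 k; have := w0 k; nra.
- rewrite -w1; apply: ler_sum => k _; have := b01 k; have := w0 k; nra.
- move=> q; rewrite dotv_suml.
  set X := dotv v q; set m := (1 + dotv q q) / 2.
  have -> : (\sum_(k < n) w k * b k) * X + (1 - \sum_(k < n) w k * b k) * m
          = \sum_(k < n) w k * (b k * X + (1 - b k) * m).
    rewrite -[in LHS]w1 mulr_suml -sumrB mulr_suml -big_split /=.
    by apply: eq_bigr => k _; ring.
  apply: ler_sum => k _; apply: ler_wpM2l => //.
  rewrite /b; case: eqP => [->|pv]; first by rewrite /= mulr1n mul1r subrr mul0r addr0.
  have Sp : sphere R d (p k) by case: (Ap k) => // /= /esym.
  rewrite /= mul0r add0r subr0 mul1r /m.
  have := dotv_amgm (p k) q.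
  rewrite /sphere /= in Sp; rewrite Sp; lra.
- move=> a' Ka.
  have -> : \sum_(k < n) w k *: p k + (\sum_(k < n) w k * b k) *: (a' - v)
     = \sum_(k < n) w k *: (if p k == v then a' else p k).
    rewrite scaler_suml -big_split /=; apply: eq_bigr => k _.
    rewrite /b; case: eqP => [->|_] /=; last by rewrite mulr0 scale0r addr0.
    by rewrite mulr1 -scalerDr addrC subrK.
  apply: convS => // k; case: ifP => // /negbT pv.
  apply: conv_sub; case: (Ap k) => [/SA //|/= pe].
  by rewrite pe eqxx in pv.
Qed.
End Geo.

Lemma ball_conv (R : realType) (d : nat) (x : 'rV[R]_d.+1) :
  dotv x x <= 1 -> conv (sphere R d.+1) x.
Proof.
move=> xb.
pose e : 'rV[R]_d.+1 := \row_j ((j == ord0)%:R).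
have dxe y : dotv y e = y 0 ord0.
  rewrite /dotv (bigD1 ord0) //= big1 ?addr0; first by rewrite mxE eqxx mulr1.
  by move=> j /negbTE jn; rewrite mxE jn mulr0.
have dee : dotv e e = 1 by rewrite dxe mxE eqxx.
set a := x 0 ord0.
set D := a ^+ 2 + 1 - dotv x x.
have D0 : 0 <= D by rewrite /D; have := sqr_ge0 a; lra.
set s := Num.sqrt D.
have s0 : 0 <= s := sqrtr_ge0 D.
have ss : s ^+ 2 = D by rewrite sqr_sqrtr.
have onS t : t = s - a \/ t = - s - a -> sphere R d.+1 (x + t *: e).
  move=> ht; rewrite /sphere /= dotv_sqD dotvZr dxe dotvZl dotvZr dee -/a.
  have : (t + a) ^+ 2 = D by case: ht => ->; rewrite -ss; ring.
  rewrite /D => H; lra.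
have [sz|sp] := eqVneq s 0.
  apply: conv_sub; rewrite /sphere /=.
  have : D = 0 by rewrite -ss sz expr0n.
  rewrite /D; have := sqr_ge0 a; lra.
have sgt : 0 < s by rewrite lt_def sp.
have as0 : a ^+ 2 <= s ^+ 2 by rewrite ss /D; lra.
have as1 : a <= s.
  rewrite leNgt; apply/negP => h.
  have h1 : 0 < (a - s) * (a + s) by apply: mulr_gt0; lra.
  have h2 : a ^+ 2 - s ^+ 2 = (a - s) * (a + s) by ring.
  lra.
have as2 : - s <= a.
  rewrite leNgt; apply/negP => h.
  have h1 : 0 < (- a - s) * (- a + s) by apply: mulr_gt0; lra.
  have h2 : a ^+ 2 - s ^+ 2 = (- a - s) * (- a + s) by ring.
  lra.
set al := (s - a) / (2 * s).
have -> : x = al *: (x + (- s - a) *: e) + (1 - al) *: (x + (s - a) *: e).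
  rewrite !scalerDr !scalerA addrACA -scalerDl.
  have -> : al + (1 - al) = 1 by ring.
  rewrite scale1r -scalerDl.
  have -> : al * (- s - a) + (1 - al) * (s - a) = 0.
    by rewrite /al; field.
  by rewrite scale0r addr0.
apply: conv2; try (apply: conv_sub; apply: onS; by [left|right]).
apply/andP; split.
  by rewrite /al divr_ge0 //; lra.
rewrite /al ler_pdivrMr; [lra|lra].
Qed.

Section Small.
Variables (R : realType) (d : nat).

Lemma sq_le (a b : R) : 0 <= a -> a <= b -> a ^+ 2 <= b ^+ 2.
Proof. by move=> a0 ab; rewrite !expr2 ler_pM. Qed.

Lemma small_dot (y : 'rV[R]_d) (eta rho : R) : 0 < eta -> 0 < rho ->
  exists eps : R, 0 < eps /\ forall x, dotv x x < eps ^+ 2 ->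
    - eta <= dotv x y /\ dotv x x < rho ^+ 2.
Proof.
move=> e0 r0.
set Y := dotv y y.
have Y0 : 0 <= Y := dotv_ge0 y.
set k := eta / (Y + 1).
have k0 : 0 < k by rewrite /k divr_gt0 //; lra.
have kY : k * Y + k = eta by rewrite /k; field; lra.
have kY0 : 0 <= k * Y by rewrite mulr_ge0 // ltW.
exists (Num.min rho k); split; first by rewrite lt_min r0 k0.
move=> x hx.
have m0 : 0 <= Num.min rho k by rewrite le_min !ltW.
have h1 : dotv x x < rho ^+ 2.
  by apply: lt_le_trans hx _; apply: sq_le => //; rewrite ge_min lexx.
have h2 : dotv x x < k ^+ 2.
  by apply: lt_le_trans hx _; apply: sq_le => //; rewrite ge_min lexx orbT.
split => //.
have := @dotv_wamgm _ _ k^-1 x y; rewrite invr_gt0 invrK => /(_ k0).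
have : k^-1 * dotv x x < k.
  have e : k^-1 * k ^+ 2 = k by field; rewrite gt_eqF.
  by rewrite -[X in _ < X]e ltr_pM2l // invr_gt0.
move=> h3 h4; rewrite -/Y in h4; lra.
Qed.

Lemma openball (q : 'rV[R]_d) : dotv q q < 1 ->
  exists r : R, 0 < r /\ forall y, dotv (y - q) (y - q) < r ^+ 2 -> dotv y y < 1.
Proof.
move=> q1.
set s := dotv q q in q1 *.
have s0 : 0 <= s := dotv_ge0 q.
set t := (1 - s) / 2.
have t0 : 0 < t by rewrite /t; lra.
have t1 : t <= 1 / 2 by rewrite /t; lra.
exists (t / 2); split; first by rewrite divr_gt0.
move=> y hy.
set b := y - q.
have -> : y = q + b by rewrite /b addrC subrK.
rewrite dotv_sqD.
have := @dotv_wamgm _ _ t q (- b) t0; rewrite dotvNr dotvNl dotvNr opprK.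
set B := dotv b b in hy *.
have hB : B < t ^+ 2 / 4 by move: hy; rewrite expr_div_n; have -> : (2:R) ^+ 2 = 4 by ring. 
have ts : t * s <= t * 1 by rewrite ler_wpM2l // ?ltW //; lra.
have tB : t^-1 * B < t / 4.
  rewrite mulrC ltr_pdivrMr //.
  by move: hB; have -> : t ^+ 2 / 4 = t / 4 * t by field. 
have B4 : B < t / 4.
  apply: lt_le_trans hB _.
  have : t * t <= t * 1 by rewrite ler_wpM2l // ?ltW //; lra.
  rewrite expr2; lra.
rewrite -/s => h; have tdef : t = (1 - s) / 2 by []; lra.
Qed.
End Small.

Lemma dotvNN (R : realType) d (x : 'rV[R]_d) : dotv (- x) (- x) = dotv x x.
Proof. by rewrite dotvNl dotvNr opprK. Qed.

Lemma vertex_spike (R : realType) (d : nat) (V : 'rV[R]_d) :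
  1 < dotv V V -> spike V V.
Proof.
move=> hV; split; last by rewrite /sphere /= => h; lra.
split.
  move=> e e0; exists V; split; first by apply: conv_sub; right.
  by rewrite subrr dotv0l exprn_gt0.
move=> [e [e0 H]].
set N := dotv V V in hV.
set tau := Num.min 1 (e ^+ 2 / (2 * N)).
have N0 : 0 < N by lra.
have e20 : 0 < e ^+ 2 by rewrite exprn_gt0.
have tau0 : 0 < tau by rewrite lt_min ltr01 divr_gt0 // mulr_gt0.
have tau1 : tau <= 1 by rewrite ge_min lexx.
have tauN : tau * N <= e ^+ 2 / 2.
  have : tau <= e ^+ 2 / (2 * N) by rewrite ge_min lexx orbT.
  rewrite ler_pdivlMr ?mulr_gt0 //; lra.
have : conv (sphere R d `|` [set V]) (V + tau *: V).
  apply: H; rewrite addrC addKr dotvZl dotvZr -/N.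
  have : tau * (tau * N) <= 1 * (tau * N) by rewrite ler_wpM2r // mulr_ge0 // ltW.
  lra.
move=> /(@decomp _ _ (sphere R d) V _ (@subset_refl _ _)) [W [W0 W1 Hb _]].
have := Hb V; rewrite dotvDl dotvZl -/N.
have : (1 - W) * ((1 + N) / 2) <= (1 - W) * N by rewrite ler_wpM2l //; lra.
have : 0 < tau * N by rewrite mulr_gt0.
lra.
Qed.

Unset Implicit Arguments.
Theorem lemma3 (R : realType) (d : nat) (I : countType) (v : I -> 'rV[R]_d)
  (hout : forall i, ~ ball_unit R d (v i))
  (hseg : forall i j, i != j ->
     exists t : R, [/\ 0 <= t, t <= 1 &
       ball_unit R d ((1 - t) *: v i + t *: v j)])
  (i : I) (u : 'rV[R]_d) (hu : sphere R d u) :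
  (forall p, spike (v i) p -> illuminates (cap_body v) u p) <->
  illuminates (cap_body v) u (v i).
Proof.
move: v hout hseg i u hu; case: d => [|d] v hout hseg i u hu.
  by exfalso; apply: (hout i); rewrite /ball_unit /= /dotv big_ord0 ler01.
have hV : 1 < dotv (v i) (v i).
  by rewrite ltNge; apply/negP => h; apply: (hout i).
split; first by move=> H; apply: H; apply: vertex_spike.
move=> [lam [lam0 [e [e0 He]]]] p [[clp nintp] nSp].
set V := v i in hV He *.
have SK : sphere R _ `<=` (sphere R _ `|` range v) by move=> x Sx; left.
have VK : conv (sphere R _ `|` range v) V by apply: conv_sub; right; exists i.
set P := dotv p p.
have [P1|P1] : P < 1 \/ 1 < P.
  have : P != 1 by apply/eqP.
  by rewrite neq_lt => /orP.
-
  have [r [r0 Hr]] := openball P1.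
  exists (r / 2); split; first by rewrite divr_gt0.
  have q1 : dotv (p + (r / 2) *: u) (p + (r / 2) *: u) < 1.
    apply: Hr; rewrite addrC addKr dotvZl dotvZr hu.
    have : 0 < r * r by rewrite mulr_gt0.
    rewrite expr2; lra.
  have [r' [r'0 Hr']] := openball q1.
  exists r'; split => // y hy.
  exact: (conv_mono SK (ball_conv (ltW (Hr' y hy)))).
- set N := dotv V V in hV.
  set del := (P - 1) / 4.
  set M := (N - 1) / 2.
  have del0 : 0 < del by rewrite /del; lra.
  have M0 : 0 < M by rewrite /M; lra.
  set W0 := del / M.
  have W00 : 0 < W0 by rewrite divr_gt0.
  set r := W0 * e / 2.
  have r0 : 0 < r by rewrite /r divr_gt0 // mulr_gt0.
  have [eps [eps0 Heps]] := small_dot p del0 r0.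
  have [c [Cc hc]] := clp eps eps0.
  have [hdot hcr] := Heps (c - p) hc.
  have [W [Wge0 Wle1 Hb Hm]] := decomp SK Cc.
  have hb := Hb p.
  have dvp := dotv_amgm V p.
  have hcp : dotv c p = dotv (c - p) p + P by rewrite dotvBl -/P; ring.
  have WM : del <= W * M.
    have : W * (dotv V p - (1 + P) / 2) <= W * M.
      by rewrite ler_wpM2l //; rewrite /M -/P -/N in dvp *; lra.
    rewrite -/P in hb; have deld : del = (P - 1) / 4 by []; lra.
  have WW0 : W0 <= W by rewrite /W0 ler_pdivrMr.
  have Wpos : 0 < W by apply: lt_le_trans WW0.
  exists (W * lam); split; first by rewrite mulr_gt0.
  exists r; split => // y hy.
  set a' := V + W^-1 *: (y - c).
  have Ka' : cap_body v a'.
    apply: He.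
    have E : a' - (V + lam *: u) =
             W^-1 *: ((y - (p + (W * lam) *: u)) + (- (c - p))).
      by apply/rowP => j; rewrite !mxE; field; rewrite gt_eqF.
    rewrite E dotvZl dotvZr.
    have hZ := dotv_par (y - (p + (W * lam) *: u)) (- (c - p)).
    rewrite dotvNN in hZ.
    set Z := dotv _ _ in hZ *.
    have -> : W^-1 * (W^-1 * Z) = Z / W ^+ 2 by field; rewrite gt_eqF.
    rewrite ltr_pdivrMr ?exprn_gt0 //.
    have hsq : W0 ^+ 2 * e ^+ 2 <= W ^+ 2 * e ^+ 2.
      rewrite -!exprMn.
      by apply: sq_le; [rewrite mulr_ge0 // ltW | rewrite ler_wpM2r // ltW].
    have r4 : 4 * r ^+ 2 = W0 ^+ 2 * e ^+ 2 by rewrite /r; field.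
    lra.
  have -> : y = c + W *: (a' - V).
    by apply/rowP => j; rewrite !mxE; field; rewrite gt_eqF.
  exact: Hm.
Qed.
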